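(* Let $\pi$ be a permutation and suppose $\pi$ contains an occurrence of the pattern $j_3$ whose underlying classical pattern is $43251$, with shaded boxes $\{(1,4),(1,5),(2,4),(2,5)\}$ and marked region $\{(2,3)\}$. Then the entries of this occurrence playing roles $1,2,3,4$ form, in the same roles, an occurrence in $S(\pi)$ of the mesh pattern $W_2=(3241,\{(1,4)\})$.
   Context: Permutations are in one-line notation. For a sequence $w$ of distinct integers, the stack-sort $S(w)$ is defined by $S(\varepsilon)=\varepsilon$ and $S(\alpha m\beta)=S(\alpha)S(\beta)m$ where $m$ is the largest entry of $w$. An occurrence of a classical pattern $p$ of length $k$ in a permutation $\sigma$ of length $n$ is a set of entries at positions $i_1<\dots<i_k$ whose values are order-isomorphic to $p$; the entry corresponding to letter $r$ of $p$ plays role $r$. With values $v_1<\dots<v_k$ of the occurrence and $i_0=v_0=0$, $i_{k+1}=v_{k+1}=n+1$, the box $(a,b)$ ($0\le a,b\le k$) is the set of entries $\sigma(x)$ with $i_a<x<i_{a+1}$, $v_b<\sigma(x)<v_{b+1}$. A pattern with shaded boxes $R$ and marked region $M$ occurs when an occurrence of the underlying classical pattern has every box in $R$ empty and the union of the boxes in $M$ contains at least one entry; a mesh pattern $(p,R)$ has no marked region. *)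

(* Defs.v *)
From mathcomp Require Import all_boot.
Set Implicit Arguments. Unset Strict Implicit. Unset Printing Implicit Defensive.

Definition is_perm (s : seq nat) : Prop := perm_eq s (iota 1 (size s)).

Fixpoint ssort_fuel (f : nat) (s : seq nat) : seq nat :=
  match f with
  | 0 => [::]
  | f'.+1 =>
    if s is [::] then [::] else
    let m := foldr maxn 0 s in
    let i := index m s in
    ssort_fuel f' (take i s) ++ ssort_fuel f' (drop i.+1 s) ++ [:: m]
  end.
Definition stack_sort (s : seq nat) : seq nat := ssort_fuel (size s) s.

(* 1-indexed access: s(x) *)
Definition at_ (s : seq nat) (x : nat) : nat := nth 0 s x.-1.

(* I = positions i_1 < ... < i_k (1-indexed) of an occurrence of the
   classical pattern p (one-line notation) in s *)
Definition is_occ (s p I : seq nat) : Prop :=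
  [/\ size I = size p, sorted ltn I, all (fun i => 0 < i <= size s) I &
      forall r t, r < size p -> t < size p ->
        (at_ s (nth 0 I r) < at_ s (nth 0 I t)) = (nth 0 p r < nth 0 p t)].

(* i_a with i_0 = 0, i_{k+1} = n+1 *)
Definition ipos (s I : seq nat) (a : nat) : nat :=
  if a == 0 then 0 else if a == (size I).+1 then (size s).+1 else nth 0 I a.-1.

(* v_b (b-th smallest value of the occurrence) with v_0 = 0, v_{k+1} = n+1 *)
Definition ival (s I : seq nat) (b : nat) : nat :=
  if b == 0 then 0 else if b == (size I).+1 then (size s).+1
  else nth 0 (sort leq [seq at_ s i | i <- I]) b.-1.

Definition in_box (s I : seq nat) (ab : nat * nat) (x : nat) : bool :=
  (ipos s I ab.1 < x < ipos s I ab.1.+1) &&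
  (ival s I ab.2 < at_ s x < ival s I ab.2.+1).

Definition box_nonempty (s I : seq nat) (ab : nat * nat) : bool :=
  has (in_box s I ab) (iota 1 (size s)).

Definition mesh_occ (s p : seq nat) (R : seq (nat * nat)) (I : seq nat) : Prop :=
  is_occ s p I /\ all (fun ab => ~~ box_nonempty s I ab) R.

Definition marked_mesh_occ (s p : seq nat) (R M : seq (nat * nat)) (I : seq nat)
  : Prop :=
  mesh_occ s p R I /\ has (box_nonempty s I) M.

Definition role_entry (s p I : seq nat) (r : nat) : nat :=
  at_ s (nth 0 I (index r p)).

(* Main.v *)
Require Import Defs.
From mathcomp Require Import all_boot zify.

Definition seg (s : seq nat) i j := drop i.+1 (take j.+1 s).

Lemma mem_seg s i j z : z \in seg s i j -> exists2 k, i < k <= j /\ k < size s & z = nth 0 s k.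
Proof.
move=> zs; have := nth_index 0 zs; have := index_mem z (seg s i j).
rewrite zs; move: (index z (seg s i j)) => t.
rewrite /seg nth_drop size_drop size_take => lt.
have {}lt : t < (if j.+1 < size s then j.+1 else size s) - i.+1 := lt.
rewrite nth_take; last by move: lt; case: (ltnP j.+1 (size s)) => hh /idP h; lia.
move=> <-; exists (i.+1 + t) => //.
move: lt; case: (ltnP j.+1 (size s)) => hh /idP h; lia.
Qed.

Lemma seg_mem s i j k : i < k <= j -> k < size s -> nth 0 s k \in seg s i j.
Proof.
move=> hk hs; have -> : nth 0 s k = nth 0 (seg s i j) (k - i.+1).
  rewrite /seg nth_drop nth_take subnKC //; lia.
apply: mem_nth; change (k - i.+1 < @size nat (seg s i j)); rewrite /seg size_drop size_take; case: (ltnP j.+1 (size s)); lia.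
Qed.

Lemma max_mem s : s != [::] -> foldr maxn 0 s \in s.
Proof.
elim: s => // x s IH _ /=; rewrite inE.
case: (s =P [::]) => [->|/eqP ne]; first by rewrite /= maxn0 eqxx.
have := IH ne; case: (leqP x (foldr maxn 0 s)) => h.
  by move=> ->; rewrite orbT.
by rewrite eqxx.
Qed.

Lemma max_ge s z : z \in s -> z <= foldr maxn 0 s.
Proof.
elim: s => // x s IH; rewrite inE /= => /orP [/eqP ->|/IH h].
  by rewrite leq_maxl.
by rewrite (leq_trans h) // leq_maxr.
Qed.

Lemma ss_unfold f s : s != [::] -> ssort_fuel f.+1 s =
  ssort_fuel f (take (index (foldr maxn 0 s) s) s) ++
  ssort_fuel f (drop (index (foldr maxn 0 s) s).+1 s) ++ [:: foldr maxn 0 s].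
Proof. by case: s. Qed.

Lemma ss_perm f s : size s <= f -> perm_eq (ssort_fuel f s) s.
Proof.
elim: f s => [|f IH] s hs; first by case: s hs.
case: (s =P [::]) => [->|/eqP ne] //.
rewrite ss_unfold //.
set m := foldr maxn 0 s.
have mm : m \in s by exact: max_mem.
set p := index m s.
have pl : p < size s by rewrite index_mem.
have def : s = take p s ++ m :: drop p.+1 s.
  by rewrite -{1}(cat_take_drop p s) (drop_nth 0 pl) nth_index.
rewrite [X in perm_eq _ X]def.
have sz1 : size (take p s) <= f by rewrite size_take pl; move: hs; lia.
have sz2 : size (drop p.+1 s) <= f by rewrite size_drop; move: hs; lia.
apply: perm_cat; first exact: IH.
by rewrite cats1 perm_rcons perm_cons IH.
Qed.


Lemma seg_shift (al be : seq nat) m i j : size al < i -> i < j ->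
  seg (al ++ m :: be) i j = seg be (i - size al - 1) (j - size al - 1).
Proof.
move=> h1 h2.
have [i' ei] : exists i', i = size al + i'.+1 by exists (i - size al - 1); lia.
have [j' ej] : exists j', j = size al + j'.+1 by exists (j - size al - 1); lia.
have -> : i - size al - 1 = i' by lia.
have -> : j - size al - 1 = j' by lia.
rewrite ei ej /seg take_cat.
have -> : ((size al + j'.+1).+1 < size al) = false by lia.
have -> : (size al + j'.+1).+1 - size al = j'.+2 by lia.
rewrite drop_cat.
have -> : ((size al + i'.+1).+1 < size al) = false by lia.
have -> : (size al + i'.+1).+1 - size al = i'.+2 by lia.
by [].
Qed.

Definition Pord (s S : seq nat) := forall i j, i < j < size s ->
  (index (nth 0 s i) S < index (nth 0 s j) S) = has (fun z => nth 0 s i < z) (seg s i j).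

Lemma step (al be Sa Sb : seq nat) m :
  uniq (al ++ m :: be) -> (forall z, z \in al ++ m :: be -> z <= m) ->
  perm_eq Sa al -> perm_eq Sb be -> Pord al Sa -> Pord be Sb ->
  Pord (al ++ m :: be) (Sa ++ Sb ++ [:: m]).
Proof.
move=> u hm pa pb IHa IHb i j hij.
have := u; rewrite cat_uniq => /and3P [ua dis ub].
have notA : forall z, z \in m :: be -> z \notin al.
  move=> z zb; apply/negP => za; move/hasP: dis; apply; by exists z.
have mA : m \notin al by apply: notA; rewrite inE eqxx.
have mB : m \notin be by move: ub => /= /andP [].
have sa := perm_mem pa; have sb := perm_mem pb.
case: (ltnP j (size al)) => hj.
  have hi : i < size al by lia.
  rewrite !nth_cat hi hj !index_cat.
  have xa : nth 0 al i \in Sa by rewrite sa; apply: mem_nth.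
  have ya : nth 0 al j \in Sa by rewrite sa; apply: mem_nth.
  rewrite xa ya.
  rewrite /seg takel_cat // -/(seg al i j); apply: IHa; lia.
case: (ltnP i (size al)) => hi.
  rewrite !nth_cat hi (ltnNge j) hj /=.
  have xa : nth 0 al i \in al by exact: mem_nth.
  have ymb : nth 0 (m :: be) (j - size al) \in m :: be.
    by apply: mem_nth => /=; move: hij; rewrite size_cat /=; lia.
  rewrite !index_cat !sa xa (negbTE (notA _ ymb)).
  rewrite ltn_addr; last by rewrite index_mem sa.
  symmetry; apply/hasP; exists m.
    have := @seg_mem (al ++ m :: be) i j (size al); rewrite nth_cat ltnn subnn /=.
    by apply; [lia | rewrite size_cat /=; lia].
  have : nth 0 al i <= m by apply: hm; rewrite mem_cat xa.
  rewrite leq_eqVlt => /orP [/eqP e|//].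
  by move: mA; rewrite -e xa.
case: (eqVneq i (size al)) => [ei|ni].
  rewrite !nth_cat ei ltnn (ltnNge j) hj subnn /=.
  have -> : j - size al = (j - size al - 1).+1 by lia.
  rewrite /=.
  have yb : nth 0 be (j - size al - 1) \in be.
    by apply: mem_nth; move: hij; rewrite size_cat /=; lia.
  have iy : index (nth 0 be (j - size al - 1)) Sb < size Sb by rewrite index_mem sb.
  rewrite !index_cat !sa !sb (negbTE mA) (negbTE mB) (negbTE (notA _ _)); last by rewrite inE yb orbT.
  rewrite yb /= eqxx addn0 ltn_add2l ltnNge (ltnW iy) /=.
  symmetry; apply/negbTE/hasPn => z /mem_drop /mem_take /hm.
  by rewrite -leqNgt.
have hi' : size al < i by lia.
rewrite !nth_cat (ltnNge i) (ltnW hi') (ltnNge j) hj /=.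
have -> : i - size al = (i - size al - 1).+1 by lia.
have -> : j - size al = (j - size al - 1).+1 by lia.
rewrite /=.
set i' := i - size al - 1; set j' := j - size al - 1.
have hij' : i' < j' < size be by move: hij; rewrite /i' /j' size_cat /=; lia.
have xb : nth 0 be i' \in be by apply: mem_nth; case/andP: hij' => h1 h2; exact: ltn_trans h1 h2.
have yb : nth 0 be j' \in be by apply: mem_nth; case/andP: hij' => h1 h2.
have xa : nth 0 be i' \notin Sa by rewrite sa notA // inE xb orbT.
have ya : nth 0 be j' \notin Sa by rewrite sa notA // inE yb orbT.
rewrite !index_cat (negbTE xa) (negbTE ya) !sb xb yb ltn_add2l IHb //.
have hij2 : i < j by case/andP: hij.
rewrite (@seg_shift al be m i j hi' hij2).
reflexivity.
Qed.

Lemma ss_order f s : size s <= f -> uniq s -> Pord s (ssort_fuel f s).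
Proof.
elim: f s => [|f IH] s hs us.
  by case: s hs us => // _ _ i j; rewrite andbF.
case: (s =P [::]) => [e i j|/eqP ne]; first by rewrite e andbF.
rewrite ss_unfold //.
set m := foldr maxn 0 s.
have mm : m \in s by exact: max_mem.
set p := index m s.
have pl : p < size s by rewrite index_mem.
have def : s = take p s ++ m :: drop p.+1 s.
  by rewrite -{1}(cat_take_drop p s) (drop_nth 0 pl) nth_index.
have sz1 : size (take p s) <= f by rewrite size_take pl; move: hs; lia.
have sz2 : size (drop p.+1 s) <= f by rewrite size_drop; move: hs; lia.
rewrite [X in Pord X _]def; apply: step.
- by rewrite -def.
- by rewrite -def => z; apply: max_ge.
- exact: ss_perm.
- exact: ss_perm.
- by apply: IH => //; apply: take_uniq.
- by apply: IH => //; apply: drop_uniq.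
Qed.


Lemma sort_eqP (s t : seq nat) : sorted leq t -> perm_eq s t -> sort leq s = t.
Proof.
move=> st pst; apply: (sorted_eq leq_trans anti_leq) => //.
  exact: (sort_sorted leq_total).
by rewrite perm_sort.
Qed.

Lemma cmp4 b c a e : e < c -> c < b -> b < a -> forall r t, r < 4 -> t < 4 ->
  (nth 0 [:: b; c; a; e] r < nth 0 [:: b; c; a; e] t) =
  (nth 0 [:: 3; 2; 4; 1] r < nth 0 [:: 3; 2; 4; 1] t).
Proof.
move=> h1 h2 h3 r t hr ht.
by case: r hr => [|[|[|[|r]]]] hr //; case: t ht => [|[|[|[|t]]]] ht //=; lia.
Qed.

Lemma ord_gt s S : Pord s S -> uniq s -> perm_eq S s -> forall pu pv,
  pv < pu < size s ->
  (index (nth 0 s pu) S < index (nth 0 s pv) S) = ~~ has (fun z => nth 0 s pv < z) (seg s pv pu).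
Proof.
move=> PO us pS pu pv h; rewrite -(PO pv pu h) ltnNge leq_eqVlt negb_or andbC.
suff ne : (index (nth 0 s pv) S != index (nth 0 s pu) S) by rewrite ne andbT.
apply/negP => /eqP e.
case/andP: (h) => h1 h2.
have mv : nth 0 s pv \in S by rewrite (perm_mem pS); apply: mem_nth; exact: ltn_trans h1 h2.
have mu : nth 0 s pu \in S by rewrite (perm_mem pS); apply: mem_nth.
have := congr1 (nth 0 S) e; rewrite !nth_index // => /eqP.
rewrite nth_uniq //; [lia | exact: ltn_trans h1 h2].
Qed.

Lemma perm5 (a b c d e : nat) : perm_eq [:: a; b; c; d; e] [:: e; c; b; a; d].
Proof. by apply/permP => P /=; lia. Qed.
Lemma perm4 (b c a e : nat) : perm_eq [:: b; c; a; e] [:: e; c; b; a].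
Proof. by apply/permP => P /=; lia. Qed.


Theorem lemma3p6 (pi I : seq nat) :
  is_perm pi ->
  marked_mesh_occ pi [:: 4; 3; 2; 5; 1]
    [:: (1, 4); (1, 5); (2, 4); (2, 5)] [:: (2, 3)] I ->
  exists J : seq nat,
    mesh_occ (stack_sort pi) [:: 3; 2; 4; 1] [:: (1, 4)] J /\
    (forall r, 1 <= r <= 4 ->
       role_entry (stack_sort pi) [:: 3; 2; 4; 1] J r
       = role_entry pi [:: 4; 3; 2; 5; 1] I r).
Proof.
move=> hp [[[hsz hsort hall hcmp] hshade] hmark].
case: I hsz hsort hall hcmp hshade hmark => [|[|p1] [|[|p2] [|[|p3] [|[|p4] [|[|p5] [|? ?]]]]]] hsz //;
  try by move/eqP: hsz.
all: move=> hsort hall; move: (hall) => /=; rewrite ?andbF // => _.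
move=> hcmp hshade hmark {hsz}.
move: hsort => /= /andP [h12 /andP [h23 /andP [h34 /andP [h45 _]]]].
move: hall => /= /and5P [_ _ _ _ /andP [h5n _]].
have upi : uniq pi by rewrite (perm_uniq hp) iota_uniq.
have memP : forall z : nat, z \in pi -> 0 < z <= size pi.
  by move=> z; rewrite (perm_mem hp) mem_iota; lia.
have ec : nth 0 pi p5 < nth 0 pi p3 by move: (hcmp 4 2 isT isT); rewrite /at_ /= => ->.
have cb : nth 0 pi p3 < nth 0 pi p2 by move: (hcmp 2 1 isT isT); rewrite /at_ /= => ->.
have ba : nth 0 pi p2 < nth 0 pi p1 by move: (hcmp 1 0 isT isT); rewrite /at_ /= => ->.
have ad : nth 0 pi p1 < nth 0 pi p4 by move: (hcmp 0 3 isT isT); rewrite /at_ /= => ->.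
have hsrt : sort leq [seq at_ pi i | i <- [:: p1.+1; p2.+1; p3.+1; p4.+1; p5.+1]] =
    [:: nth 0 pi p5; nth 0 pi p3; nth 0 pi p2; nth 0 pi p1; nth 0 pi p4].
  apply: sort_eqP; first by rewrite /= (ltnW ec) (ltnW cb) (ltnW ba) (ltnW ad).
  exact: perm5.
move: hshade => /and4P [s14 s15 s24 /andP [s25 _]].
move/hasPn: s14 => s14; move/hasPn: s15 => s15; move/hasPn: s24 => s24; move/hasPn: s25 => s25.
have Hsh : forall k, p1 < k < p3 -> k < size pi -> nth 0 pi k <= nth 0 pi p1.
  move=> k hk kn; rewrite leqNgt; apply/negP => ak.
  have zm : nth 0 pi k \in pi by apply: mem_nth.
  have := memP _ zm => /andP [z0 zn].
  have hx : k.+1 \in iota 1 (size pi) by rewrite mem_iota; lia.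
  have := s14 _ hx; rewrite /in_box /ipos /ival hsrt /at_ /= => t14.
  have := s15 _ hx; rewrite /in_box /ipos /ival hsrt /at_ /= => t15.
  have := s24 _ hx; rewrite /in_box /ipos /ival hsrt /at_ /= => t24.
  have := s25 _ hx; rewrite /in_box /ipos /ival hsrt /at_ /= => t25.
  have kd : nth 0 pi k != nth 0 pi p4.
    rewrite nth_uniq //; last exact: (ltn_trans (h45 : p4 < p5) h5n).
    by apply/negP => /eqP e; move: hk h34; rewrite e; lia.
  case: (eqVneq k p2) => [ek|nk]; first by move: ak; rewrite ek ltnNge (ltnW ba).
  rewrite neq_ltn in kd; rewrite neq_ltn in nk.
  clear -t14 t15 t24 t25 kd nk hk ak zn; lia.
have p1n : p1 < size pi by lia.
have p2n : p2 < size pi by lia.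
have p3n : p3 < size pi by lia.
have p4n : p4 < size pi by lia.
move: hmark; rewrite orbF => /hasP [x hx].
rewrite /in_box /ipos /ival hsrt /at_ /= => hin.
have xn : x.-1 < size pi by move: hx; rewrite mem_iota; lia.
have hq : p2 < x.-1 < p3 by lia.
have vq : nth 0 pi p2 < nth 0 pi x.-1 by lia.
set S := stack_sort pi.
have pS : perm_eq S pi := @ss_perm (size pi) pi (leqnn _).
have PO : Pord pi S := @ss_order (size pi) pi (leqnn _) upi.
have uS : uniq S by rewrite (perm_uniq pS).
have mS : forall k, k < size pi -> nth 0 pi k \in S by move=> k kn; rewrite (perm_mem pS) mem_nth.
have O1 : index (nth 0 pi p2) S < index (nth 0 pi p3) S.
  rewrite PO; last by lia.
  by apply/hasP; exists (nth 0 pi x.-1) => //; apply: seg_mem; lia.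
have O2 : index (nth 0 pi p3) S < index (nth 0 pi p1) S.
  rewrite (@ord_gt pi S PO upi pS p3 p1); last by lia.
  apply/hasPn => z /mem_seg [k [hk kn] ->]; rewrite -leqNgt.
  case: (eqVneq k p3) => [->|nk]; first by rewrite ltnW // (ltn_trans cb ba).
  by apply: Hsh => //; lia.
have O3 : index (nth 0 pi p1) S < index (nth 0 pi p5) S.
  rewrite PO; last by lia.
  by apply/hasP; exists (nth 0 pi p4) => //; apply: seg_mem; lia.
have aS : (nth 0 pi p1) \in S by apply: mS.
have bS : (nth 0 pi p2) \in S by apply: mS.
have cS : (nth 0 pi p3) \in S by apply: mS.
have eS : (nth 0 pi p5) \in S by apply: mS; lia.
exists [:: (index (nth 0 pi p2) S).+1; (index (nth 0 pi p3) S).+1; (index (nth 0 pi p1) S).+1; (index (nth 0 pi p5) S).+1].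
have atJ : forall z, z \in S -> at_ S (index z S).+1 = z.
  by move=> z zS; rewrite /at_ /= nth_index.
have hmapJ : [seq at_ S i | i <- [:: (index (nth 0 pi p2) S).+1; (index (nth 0 pi p3) S).+1; (index (nth 0 pi p1) S).+1; (index (nth 0 pi p5) S).+1]]
   = [:: (nth 0 pi p2); (nth 0 pi p3); (nth 0 pi p1); (nth 0 pi p5)] by rewrite /= !atJ.
have hsrtJ : sort leq [:: (nth 0 pi p2); (nth 0 pi p3); (nth 0 pi p1); (nth 0 pi p5)] = [:: (nth 0 pi p5); (nth 0 pi p3); (nth 0 pi p2); (nth 0 pi p1)].
  apply: sort_eqP; first by rewrite /= (ltnW ec) (ltnW cb) (ltnW ba).
  exact: perm4.
split; last first.
  move=> r /andP [r1 r4].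
  case: r r1 r4 => [|[|[|[|[|r]]]]] // _ _; rewrite /role_entry /=.
  - exact: atJ.
  - exact: atJ.
  - exact: atJ.
  - exact: atJ.
split.
  split => //.
  - have O1' : (index (nth 0 pi p2) S).+1 < (index (nth 0 pi p3) S).+1 := O1.
    have O2' : (index (nth 0 pi p3) S).+1 < (index (nth 0 pi p1) S).+1 := O2.
    have O3' : (index (nth 0 pi p1) S).+1 < (index (nth 0 pi p5) S).+1 := O3.
    by rewrite /= O1' O2' O3'.
  - by rewrite /= !index_mem aS bS cS eS.
  - move=> r t hr ht.
    have e1 : forall r, r < 4 -> at_ S (nth 0 [:: (index (nth 0 pi p2) S).+1; (index (nth 0 pi p3) S).+1; (index (nth 0 pi p1) S).+1; (index (nth 0 pi p5) S).+1] r) = nth 0 [:: (nth 0 pi p2); (nth 0 pi p3); (nth 0 pi p1); (nth 0 pi p5)] r.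
      by move=> r' hr'; rewrite -hmapJ (nth_map 0).
    rewrite !e1 //; exact: cmp4.
rewrite /= andbT; apply/hasPn => y hy.
rewrite /in_box /ipos /ival hmapJ hsrtJ /=.
apply/negP => /and3P [/andP [l1 l2] v1 _].
have yn : y.-1 < size S by move: hy; rewrite mem_iota; lia.
have zS : at_ S y \in S by apply: mem_nth.
have zpi : at_ S y \in pi by rewrite -(perm_mem pS).
have Bz : index (at_ S y) S = y.-1 by rewrite /at_ index_uniq.
have kn := index_mem (at_ S y) pi; rewrite zpi in kn.
have zk := nth_index 0 zpi.
move: Bz v1 kn zk; move: (at_ S y) => z; move: (index z pi) => k Bz v1 kn zk.
subst z.
have {}kn : k < @size nat pi := kn.
have {}Bz : index (nth 0 pi k) S = y.-1 := Bz.
have {}l1 : (index (nth 0 pi p2) S).+1 < y := l1.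
have {}l2 : y < (index (nth 0 pi p3) S).+1 := l2.
have {}v1 : nth 0 pi p1 < nth 0 pi k := v1.
have Lb : index (nth 0 pi p2) S < index (nth 0 pi k) S by lia.
have Lc : index (nth 0 pi k) S < index (nth 0 pi p3) S by lia.
clear l1 l2 Bz hy yn zS zpi.
case: (ltngtP k p1) => [kl|kg|ke].
- case hh : (has (fun w => nth 0 pi k < w) (seg pi k p1)).
  + have : index (nth 0 pi k) S < index (nth 0 pi p2) S.
      rewrite PO; last by lia.
      move/hasP: hh => [w /mem_seg [k' [hk' _] ->] hw].
      by apply/hasP; exists (nth 0 pi k') => //; apply: seg_mem; lia.
    lia.
  + have hlt : (index (nth 0 pi k) S < index (nth 0 pi p1) S) = false.
      by rewrite PO ?hh //; lia.
    lia.
- case: (ltngtP k p3) => [kl3|kg3|ke3].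
  + have : p1 < k < p3 by rewrite kg kl3.
    move/Hsh => /(_ kn); lia.
  + have : index (nth 0 pi p3) S < index (nth 0 pi k) S.
      rewrite PO; last by lia.
      apply/hasP; exists (nth 0 pi k); [apply: seg_mem; lia | lia].
    lia.
  + move: v1; rewrite ke3; lia.
- by move: v1; rewrite ke ltnn.
Qed.
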